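(* Let $M$ be a partial multiplication matrix, and let $\pi^\#$ be an $M$-indivisible $M$-gridded permutation with more than one point. Then there is a cycle of the row-column graph $G_M$ such that every cell corresponding to an edge of this cycle is non-empty in $\pi^\#$, and the gridded subpermutation of $\pi^\#$ consisting of the last point of each of these cells is $M$-indivisible.
   Context: A gridding matrix has entries in $\{0,1,-1\}$; an $m\times n$ one has $m$ columns, $n$ rows, $M_{ij}$ in column $i$ from the left and row $j$ from the bottom. An $M$-gridding of a permutation $\pi$ of length $L$ is a choice of vertical lines $\tfrac12=v_0\le\dots\le v_m=L+\tfrac12$ and horizontal lines $\tfrac12=h_0\le\dots\le h_n=L+\tfrac12$, not through points of $\pi$, such that in each cell $C_{ij}=\{v_{i-1}<x<v_i,\ h_{j-1}<y<h_j\}$ the points of $\pi$ are absent if $M_{ij}=0$, increasing if $M_{ij}=1$, decreasing if $M_{ij}=-1$; the result is an $M$-gridded permutation. The row-column graph $G_M$ is the bipartite graph on $\{1,\dots,m\}\cup\{1',\dots,n'\}$ with edge $ij'$ iff $M_{ij}\ne0$; cell $(i,j)$ corresponds to edge $ij'$. $M$ is a partial multiplication matrix: there are fixed $c_1,\dots,c_m,r_1,\dots,r_n\in\{\pm1\}$ with $M_{ij}=c_ir_j$ for each non-zero entry. Column $i$ is oriented left-to-right if $c_i=1$, right-to-left otherwise; row $j$ bottom-to-top if $r_j=1$, top-to-bottom otherwise. The points in a non-zero cell $(i,j)$ are thereby linearly ordered (consistently with both the column and row orientations); the last point of the cell is the final one in this order. $M$-sum: for $M$-gridded $\sigma^\#,\tau^\#$,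 $\sigma^\#\boxplus\tau^\#$ is the $M$-gridded permutation whose points are those of $\sigma^\#$ and $\tau^\#$, each in the cell it occupied, with the relative order among points of $\sigma^\#$ and among points of $\tau^\#$ unchanged, and such that in every column of cells all points of $\sigma^\#$ precede all points of $\tau^\#$ in the column's orientation and in every row of cells all points of $\sigma^\#$ precede all points of $\tau^\#$ in the row's orientation. An $M$-gridded permutation is $M$-divisible if it equals $\sigma^\#\boxplus\tau^\#$ with $\sigma^\#,\tau^\#$ non-empty, and $M$-indivisible otherwise. A gridded subpermutation inherits the cells of the points it keeps. *)

(* Defs.v *)
From mathcomp Require Import all_boot all_order all_algebra all_fingroup.
Set Implicit Arguments. Unset Strict Implicit. Unset Printing Implicit Defensive.
Import Order.TTheory GRing.Theory Num.Theory.
Local Open Scope ring_scope.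

(* A gridding matrix with m columns and n rows: M i j is the entry in
   column i (from the left) and row j (from the bottom). *)
Definition gridding_matrix (m n : nat) (M : 'I_m -> 'I_n -> int) : Prop :=
  forall i j, M i j \in [:: 0; 1; -1].

Definition partial_mult (m n : nat) (M : 'I_m -> 'I_n -> int)
    (c : 'I_m -> int) (r : 'I_n -> int) : Prop :=
  gridding_matrix M /\
  (forall i, c i = 1 \/ c i = -1) /\ (forall j, r j = 1 \/ r j = -1) /\
  (forall i j, M i j != 0 -> M i j = c i * r j).

(* An M-gridded permutation: a permutation pi of length L (point k has
   x-coordinate k and y-coordinate pi k, 0-based) together with the cell of
   each point: column col k and row row k.  Existence of gridlines is
   equivalent to col being weakly increasing in x and row weakly increasing
   in y; each cell's content must be empty / increasing / decreasing
   according to M. *)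
Definition is_gridded (m n : nat) (M : 'I_m -> 'I_n -> int) (L : nat)
    (pi : 'S_L) (col : 'I_L -> 'I_m) (row : 'I_L -> 'I_n) : Prop :=
  (forall k k' : 'I_L, (k <= k')%N -> (col k <= col k')%N) /\
  (forall k k' : 'I_L, (pi k <= pi k')%N -> (row k <= row k')%N) /\
  (forall k, M (col k) (row k) != 0) /\
  (forall k k' : 'I_L, (k < k')%N -> col k = col k' -> row k = row k' ->
     0 < M (col k) (row k) * ((pi k')%:Z - (pi k)%:Z)).

(* For point sets S, T
   partitioning a point set P of pi#, this says exactly that the gridded
   subpermutation on P equals (pi#|S) [M-sum] (pi#|T). *)
Definition Msum_split (m n L : nat) (c : 'I_m -> int) (r : 'I_n -> int)
    (pi : 'S_L) (col : 'I_L -> 'I_m) (row : 'I_L -> 'I_n)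
    (S T : {set 'I_L}) : Prop :=
  forall a b, a \in S -> b \in T ->
    (col a = col b -> 0 < c (col a) * ((b : nat)%:Z - (a : nat)%:Z)) /\
    (row a = row b -> 0 < r (row a) * ((pi b)%:Z - (pi a)%:Z)).

Definition Mdivisible_on (m n L : nat) (c : 'I_m -> int) (r : 'I_n -> int)
    (pi : 'S_L) (col : 'I_L -> 'I_m) (row : 'I_L -> 'I_n)
    (P : {set 'I_L}) : Prop :=
  exists S : {set 'I_L}, S \subset P /\ S != set0 /\ P :\: S != set0 /\
    Msum_split c r pi col row S (P :\: S).

Definition Mindivisible_on (m n L : nat) (c : 'I_m -> int) (r : 'I_n -> int)
    (pi : 'S_L) (col : 'I_L -> 'I_m) (row : 'I_L -> 'I_n)
    (P : {set 'I_L}) : Prop :=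
  ~ Mdivisible_on c r pi col row P.

(* A cycle of the row-column graph G_M (bipartite, so of length 2t, t >= 2):
   distinct columns cs 0, ..., cs (t-1) and distinct rows rs 0, ..., rs (t-1),
   with edges cs s -- rs s' and rs s -- cs (s+1 mod t). *)
Definition GM_cycle (m n : nat) (M : 'I_m -> 'I_n -> int) (t : nat)
    (cs : 'I_t -> 'I_m) (rs : 'I_t -> 'I_n) : Prop :=
  (2 <= t)%N /\ injective cs /\ injective rs /\
  (forall s, M (cs s) (rs s) != 0 /\ M (cs (ordS s)) (rs s) != 0).

Definition cycle_cell (m n t : nat) (cs : 'I_t -> 'I_m) (rs : 'I_t -> 'I_n)
    (i : 'I_m) (j : 'I_n) : bool :=
  [exists s : 'I_t, (j == rs s) && ((i == cs s) || (i == cs (ordS s)))].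

(* k is the last point of its cell (in the orientation of its column,
   which agrees with that of its row inside a non-empty cell). *)
Definition is_last_point (m n L : nat) (c : 'I_m -> int)
    (col : 'I_L -> 'I_m) (row : 'I_L -> 'I_n) (k : 'I_L) : bool :=
  [forall k' : 'I_L, ((col k' == col k) && (row k' == row k)) ==>
     (c (col k) * ((k' : nat)%:Z - (k : nat)%:Z) <= 0)].

Definition cycle_last_points (m n L t : nat) (c : 'I_m -> int)
    (col : 'I_L -> 'I_m) (row : 'I_L -> 'I_n)
    (cs : 'I_t -> 'I_m) (rs : 'I_t -> 'I_n) : {set 'I_L} :=
  [set k | cycle_cell cs rs (col k) (row k) && is_last_point c col row k].

(* Main.v *)
Require Import Defs.
From mathcomp Require Import all_boot all_order all_algebra all_fingroup.
From mathcomp Require Import zify.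
From Stdlib Require Import Classical.
Import Order.TTheory GRing.Theory Num.Theory.
Local Open Scope ring_scope.
Set Implicit Arguments. Unset Strict Implicit.

Lemma pm1_mul (x : int) : (x = 1 \/ x = -1) -> x != 0.
Proof. by case=> ->. Qed.

Lemma cell_sign (m n : nat) (M : 'I_m -> 'I_n -> int)
    (c : 'I_m -> int) (r : 'I_n -> int)
    (L : nat) (pi : 'S_L) (col : 'I_L -> 'I_m) (row : 'I_L -> 'I_n)
    (a b : 'I_L) :
  partial_mult M c r -> is_gridded M pi col row ->
  col a = col b -> row a = row b -> a != b ->
  (0 < c (col a) * ((b:nat)%:Z - (a:nat)%:Z)) =
  (0 < r (row a) * ((pi b : nat)%:Z - (pi a : nat)%:Z)).
Proof.
move=> [_ [hc [hr hM]]] [_ [_ [hnz hcell]]] hcol hrow hab.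
have hMa := hM _ _ (hnz a).
case: (ltngtP a b) => hlt.
- have := hcell a b hlt hcol hrow; rewrite hMa => h.
  case: (hc (col a)) => hca; case: (hr (row a)) => hrb; rewrite hca hrb in h *;
    apply/idP/idP => ?; lia.
- have := hcell b a hlt (esym hcol) (esym hrow); rewrite -hcol -hrow hMa => h.
  case: (hc (col a)) => hca; case: (hr (row a)) => hrb; rewrite hca hrb in h *;
    apply/idP/idP => ?; lia.
- by case/eqP: hab; apply: val_inj.
Qed.

Definition cmeas (L : nat) (ci : int) (k : 'I_L) : nat :=
  if ci == 1 then (k : nat) else (L - k)%N.

Definition colmax (m L : nat) (c : 'I_m -> int) (col : 'I_L -> 'I_m) (a : 'I_L) :=
  [arg max_(k > a | col k == col a) cmeas (c (col a)) k].

Definition rowmax (n L : nat) (r : 'I_n -> int) (pi : 'S_L) (row : 'I_L -> 'I_n)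
   (a : 'I_L) :=
  [arg max_(k > a | row k == row a) cmeas (r (row a)) (pi k)].

Definition cl (m L : nat) (c : 'I_m -> int) (col : 'I_L -> 'I_m) (a : 'I_L) :=
  forall k, col k = col a -> c (col a) * ((k:nat)%:Z - (a:nat)%:Z) <= 0.

Definition rl (n L : nat) (r : 'I_n -> int) (pi : 'S_L) (row : 'I_L -> 'I_n) (a : 'I_L) :=
  forall k, row k = row a -> r (row a) * ((pi k:nat)%:Z - (pi a:nat)%:Z) <= 0.

Lemma colmax_spec (m L : nat) (c : 'I_m -> int) (col : 'I_L -> 'I_m) (a : 'I_L) :
  (forall i, c i = 1 \/ c i = -1) ->
  col (colmax c col a) = col a /\ cl c col (colmax c col a).
Proof.
move=> hc; rewrite /colmax; case: arg_maxnP => //= p /eqP hp hmax.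
split => // k; rewrite hp => hk; have := hmax k (introT eqP hk).
have ltk := ltn_ord k; have ltp := ltn_ord p.
rewrite /cmeas; case: (hc (col a)) => ->; rewrite ?eqxx //= => ?; lia.
Qed.

Lemma rowmax_spec (n L : nat) (r : 'I_n -> int) (pi : 'S_L) (row : 'I_L -> 'I_n) (a : 'I_L) :
  (forall j, r j = 1 \/ r j = -1) ->
  row (rowmax r pi row a) = row a /\ rl r pi row (rowmax r pi row a).
Proof.
move=> hr; rewrite /rowmax; case: arg_maxnP => //= p /eqP hp hmax.
split => // k; rewrite hp => hk; have := hmax k (introT eqP hk).
have ltk := ltn_ord (pi k); have ltp := ltn_ord (pi p).
rewrite /cmeas; case: (hr (row a)) => ->; rewrite ?eqxx //= => ?; lia.
Qed.

Lemma cl_uniq (m L : nat) (c : 'I_m -> int) (col : 'I_L -> 'I_m) (p p' : 'I_L) :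
  (forall i, c i = 1 \/ c i = -1) ->
  cl c col p -> cl c col p' -> col p = col p' -> p = p'.
Proof.
move=> hc h1 h2 e; have := h1 p' (esym e); have := h2 p e; rewrite e.
move=> u v; apply: ord_inj; case: (hc (col p')) => hh; rewrite hh in u v; lia.
Qed.

Lemma rl_uniq (n L : nat) (r : 'I_n -> int) (pi : 'S_L) (row : 'I_L -> 'I_n) (p p' : 'I_L) :
  (forall j, r j = 1 \/ r j = -1) ->
  rl r pi row p -> rl r pi row p' -> row p = row p' -> p = p'.
Proof.
move=> hr h1 h2 e; have := h1 p' (esym e); have := h2 p e; rewrite e.
move=> u v; apply: (@perm_inj _ pi); apply: ord_inj.
case: (hr (row p')) => hh; rewrite hh in u v; lia.
Qed.

Lemma cl_last (m n L : nat) (c : 'I_m -> int) (col : 'I_L -> 'I_m) (row : 'I_L -> 'I_n) a :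
  cl c col a -> is_last_point c col row a.
Proof. by move=> h; apply/forallP => k; apply/implyP => /andP[/eqP h1 _]; exact: h k h1. Qed.

Lemma rl_last (m n : nat) (M : 'I_m -> 'I_n -> int)
    (c : 'I_m -> int) (r : 'I_n -> int)
    (L : nat) (pi : 'S_L) (col : 'I_L -> 'I_m) (row : 'I_L -> 'I_n) a :
  partial_mult M c r -> is_gridded M pi col row ->
  rl r pi row a -> is_last_point c col row a.
Proof.
move=> hp hg h; apply/forallP => k; apply/implyP => /andP[/eqP h1 /eqP h2].
case: (eqVneq a k) => [<-|ne]; first by rewrite subrr mulr0.
rewrite leNgt (cell_sign hp hg (esym h1) (esym h2) ne) -leNgt.
exact: h k h2.
Qed.

Lemma last_uniq (m n L : nat) (c : 'I_m -> int) (col : 'I_L -> 'I_m) (row : 'I_L -> 'I_n) p p' :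
  (forall i, c i = 1 \/ c i = -1) ->
  is_last_point c col row p -> is_last_point c col row p' ->
  col p = col p' -> row p = row p' -> p = p'.
Proof.
move=> hc /forallP h1 /forallP h2 e1 e2.
have := implyP (h1 p'); rewrite e1 e2 !eqxx => /(_ isT).
have := implyP (h2 p); rewrite e1 e2 !eqxx => /(_ isT).
move=> u v; apply: ord_inj; case: (hc (col p')) => hh; rewrite hh in u v; lia.
Qed.

Lemma not_both (m n : nat) (c : 'I_m -> int) (r : 'I_n -> int)
    (L : nat) (pi : 'S_L) (col : 'I_L -> 'I_m) (row : 'I_L -> 'I_n) a :
  (forall i, c i = 1 \/ c i = -1) -> (forall j, r j = 1 \/ r j = -1) ->
  (1 < L)%N -> Mindivisible_on c r pi col row [set: 'I_L] ->
  cl c col a -> rl r pi row a -> False.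
Proof.
move=> hc hr hL hind hcl hrl; apply: hind; exists (setT :\ a).
split; first exact: subsetT.
split.
  have h0 : (0 < L)%N by lia.
  apply/set0Pn; case: (eqVneq (a : nat) 0%N) => ha.
  - exists (Ordinal hL); rewrite !inE andbT; apply/eqP => /(congr1 val) /=; lia.
  - exists (Ordinal h0); rewrite !inE andbT; apply/eqP => /(congr1 val) /=; lia.
split.
  by apply/set0Pn; exists a; rewrite !inE eqxx.
move=> x y; rewrite !inE !andbT negbK => hx /eqP ->.
have hxa : (x : nat) <> a by move=> /val_inj e; rewrite e eqxx in hx.
have hpxa : (pi x : nat) <> pi a by move=> /val_inj /perm_inj e; rewrite e eqxx in hx.
split => e.
- have := hcl x e; rewrite -e; case: (hc (col x)) => ->; lia.
- have := hrl x e; rewrite -e; case: (hr (row x)) => ->; lia.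
Qed.

Unset Implicit Arguments.

Theorem lemma3p7 (m n : nat) (M : 'I_m -> 'I_n -> int)
    (c : 'I_m -> int) (r : 'I_n -> int)
    (L : nat) (pi : 'S_L) (col : 'I_L -> 'I_m) (row : 'I_L -> 'I_n) :
  partial_mult M c r ->
  is_gridded M pi col row ->
  (1 < L)%N ->
  Mindivisible_on c r pi col row [set: 'I_L] ->
  exists (t : nat) (cs : 'I_t -> 'I_m) (rs : 'I_t -> 'I_n),
    GM_cycle M cs rs /\
    (forall i j, cycle_cell cs rs i j ->
       exists k : 'I_L, col k = i /\ row k = j) /\
    Mindivisible_on c r pi col row (cycle_last_points c col row cs rs).
Proof.
move=> hpm hg hL hind.
have [_ [hc [hr hM]]] := hpm.
pose G := fun a => colmax c col (rowmax r pi row a).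
have h0 : (0 < L)%N by lia.
pose x1 := Ordinal h0.
have [a [b [hab eab]]] : exists a b, (a < b)%N /\ iter a G x1 = iter b G x1.
  apply: NNPP => hne.
  pose f := fun k : 'I_L.+1 => iter k G x1.
  have finj : injective f.
    move=> i j hij; apply: ord_inj; case: (ltngtP i j) => // hlt; exfalso; apply: hne.
    - by exists i, j.
    - by exists j, i.
  have := @leq_card _ _ f finj; rewrite !card_ord; lia.
pose x2 := iter a G x1.
have hex : exists t, (0 < t)%N && (iter t G x2 == x2).
  exists (b - a)%N; apply/andP; split; first by rewrite subn_gt0.
  by rewrite /x2 -iterD subnK ?eab // ltnW.
case: (ex_minnP hex) => t /andP[t0 /eqP ht] tmin.
pose p := fun k => iter k G x2.
pose q := fun k => rowmax r pi row (p k).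
have pS : forall k, p k.+1 = G (p k) by move=> k; rewrite /p iterS.
have pper1 : forall k, p (k + t)%N = p k by move=> k; rewrite /p iterD ht.
have pper : forall j k, p (j + k * t)%N = p j.
  move=> j; elim=> [|k ih]; first by rewrite mul0n addn0.
  by rewrite mulSn (addnC t) addnA pper1 ih.
have pmod : forall k, p (k %% t)%N = p k.
  by move=> k; rewrite {2}(divn_eq k t) addnC pper.
have hGcl : forall a, cl c col (G a) by move=> a'; case: (colmax_spec col (rowmax r pi row a') hc).
have pcl : forall k, cl c col (p k).
  move=> k; rewrite -pper1 -(prednK t0) addnS pS; exact: hGcl.
have qrl : forall k, rl r pi row (q k) /\ row (q k) = row (p k).
  move=> k; case: (rowmax_spec pi row (p k) hr) => h1 h2; split => //.
have colq : forall k, col (p k.+1) = col (q k).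
  move=> k; rewrite pS; case: (colmax_spec col (q k) hc) => //.
have pq_ne : forall k, p k <> q k.
  move=> k e; apply: (not_both hc hr hL hind (pcl k)); rewrite e; exact: (qrl k).1.
have qp_ne : forall k, q k <> p k.+1.
  move=> k e; apply: (not_both hc hr hL hind (pcl k.+1)); rewrite -e; exact: (qrl k).1.
have p_inj : forall s s', (s < t)%N -> (s' < t)%N -> p s = p s' -> s = s'.
  move=> s s' hs hs' e; case: (ltngtP s s') => // hlt; exfalso.
  - have : iter (t - s' + s) G x2 = x2 by rewrite iterD; rewrite /p in e; rewrite e -iterD subnK ?ht // ltnW.
    move=> e2; have := tmin (t - s' + s)%N; rewrite e2 eqxx andbT; lia.
  - have : iter (t - s + s') G x2 = x2 by rewrite iterD; rewrite /p in e; rewrite -e -iterD subnK ?ht // ltnW.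
    move=> e2; have := tmin (t - s + s')%N; rewrite e2 eqxx andbT; lia.
have pordS : forall s : 'I_t, p (ordS s) = p s.+1 by move=> s; rewrite /= pmod.
pose cs := fun s : 'I_t => col (p s).
pose rs := fun s : 'I_t => row (p s).
exists t, cs, rs.
split.
  split.
    case: (leqP 2 t) => // ht2; exfalso.
    have t1 : t = 1%N by lia.
    have e10 : p 1%N = p 0%N by have := pper1 0%N; rewrite add0n t1.
    apply: (pq_ne 0%N); apply: (last_uniq hc (cl_last row (pcl 0%N)) (rl_last hpm hg (qrl 0%N).1)).
    - by rewrite -colq e10.
    - by rewrite (qrl 0%N).2.
  split.
    move=> s s' e; apply: ord_inj; apply: p_inj (ltn_ord s) (ltn_ord s') _.
    exact: (cl_uniq hc (pcl s) (pcl s') e).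
  split.
    move=> s s' e.
    have eq : q s = q s'.
      apply: (rl_uniq hr (qrl s).1 (qrl s').1); rewrite (qrl s).2 (qrl s').2; exact: e.
    have : p (ordS s) = p (ordS s') by rewrite !pordS !pS /G -/(q s) -/(q s') eq.
    move=> /(p_inj _ _ (ltn_ord _) (ltn_ord _)) /ord_inj; exact: (can_inj (@ordSK t)).
  move=> s; split; first exact: (hg.2.2.1 (p s)).
  rewrite /cs /rs pordS colq -(qrl s).2; exact: (hg.2.2.1 (q s)).
split.
  move=> i j /existsP [s /andP [/eqP -> /orP [/eqP -> | /eqP ->]]].
  - by exists (p s).
  - exists (q s); rewrite /cs /rs pordS colq (qrl s).2 //.
set P := cycle_last_points c col row cs rs.
have memP_p : forall k, p k \in P.
  move=> k; rewrite inE; apply/andP; split; last exact: cl_last (pcl k).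
  apply/existsP; exists (Ordinal (ltn_pmod k t0)); by rewrite /cs /rs /= pmod !eqxx.
have memP_q : forall kk, q kk \in P.
  move=> kk; rewrite inE; apply/andP; split; last exact: rl_last hpm hg (qrl kk).1.
  apply/existsP; exists (Ordinal (ltn_pmod kk t0)); rewrite /cs /rs pordS /= pmod.
  by rewrite (qrl kk).2 eqxx /= -pS colq eqxx orbT.
have P_inv : forall x, x \in P -> exists k, x = p k \/ x = q k.
  move=> x; rewrite inE => /andP [/existsP [s /andP [/eqP hr' /orP [/eqP hc'|/eqP hc']]] hlast];
    exists (s : nat).
  - by left; apply: (last_uniq hc hlast (cl_last row (pcl s))).
  - right; apply: (last_uniq hc hlast (rl_last hpm hg (qrl s).1)).
    + by rewrite hc' /cs pordS colq.
    + by rewrite hr' (qrl s).2.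
move=> [S [hSP [hS0 [hT0 hsplit]]]].
have edge : forall a b, a \in P :\: S -> b \in P ->
   ((col a = col b /\ 0 < c (col a) * ((b:nat)%:Z - (a:nat)%:Z)) \/
    (row a = row b /\ 0 < r (row a) * ((pi b:nat)%:Z - (pi a:nat)%:Z))) -> b \in P :\: S.
  move=> a' b' ha hb he; rewrite inE hb andbT; apply/negP => hbS.
  have [h1 h2] := hsplit b' a' hbS ha.
  case: he => [[e pos] | [e pos]].
  - have := h1 (esym e); rewrite e in pos *; case: (hc (col b')) => hh; rewrite hh in pos *; lia.
  - have := h2 (esym e); rewrite e in pos *; case: (hr (row b')) => hh; rewrite hh in pos *; lia.
have step1 : forall k, p k \in P :\: S -> q k \in P :\: S.
  move=> k hk; apply: (edge _ _ hk (memP_q k)); right; split; first by rewrite (qrl k).2.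
  have := (qrl k).1 (p k) (esym (qrl k).2); rewrite (qrl k).2.
  have hne : (pi (p k) : nat) <> pi (q k) by move=> /ord_inj /perm_inj; exact: pq_ne.
  case: (hr (row (p k))) => ->; lia.
have step2 : forall k, q k \in P :\: S -> p k.+1 \in P :\: S.
  move=> k hk; apply: (edge _ _ hk (memP_p k.+1)); left; split; first by rewrite colq.
  have := pcl k.+1 (q k) (esym (colq k)); rewrite -(colq k).
  have hne : (q k : nat) <> p k.+1 by move=> /ord_inj; exact: qp_ne.
  case: (hc (col (p k.+1))) => ->; lia.
have pall : forall k j, p k \in P :\: S -> p (k + j)%N \in P :\: S.
  move=> k; elim=> [|j ih] hk; first by rewrite addn0.
  by rewrite addnS; apply: step2; apply: step1; apply: ih.
have [k0 hk0] : exists k0, p k0 \in P :\: S.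
  case/set0Pn: hT0 => x hx.
  have hxP : x \in P by move: hx; rewrite inE => /andP[].
  case: (P_inv x hxP) => k [e|e]; rewrite e in hx.
  - by exists k.
  - by exists k.+1; apply: step2.
have allT : forall s, p s \in P :\: S /\ q s \in P :\: S.
  move=> s.
  have hle : (k0 <= s + k0 * t)%N by have := leq_pmulr k0 t0; lia.
  have hp : p s \in P :\: S by rewrite -(pper s k0) -(subnKC hle); apply: pall.
  by split => //; apply: step1.
case/set0Pn: hS0 => y hy.
have hyP : y \in P := subsetP hSP y hy.
case: (P_inv y hyP) => k [e|e].
- by have := (allT k).1; rewrite -e inE hy.
- by have := (allT k).2; rewrite -e inE hy.
Qed.
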